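(* Let $m\geq 2$ be an integer and $(t_n)_{n=0}^{\infty}$ the $TM_m$ sequence. If $m=2$, then $(t_n)_{n=0}^{\infty}$ is palindromic. If $m>2$, then $(t_n)_{n=0}^{\infty}$ is not eventually palindromic.
   Context: For an integer $m\geq 2$, the $TM_m$ sequence $(t_n)_{n=0}^{\infty}$ is defined by: if $n=\sum_{j=0}^{k}c_j m^j$ is the base-$m$ expansion of $n\geq 0$ (digits $c_j\in\{0,\ldots,m-1\}$), then $t_n:=\sum_{j=0}^{k}c_j \bmod m$. A sequence $(x_i)_{i=0}^{\infty}$ is palindromic if there exists an increasing sequence of positive integers $(n_j)_{j\geq 1}$ such that for every $j$ and every $k\in\{0,\ldots,n_j\}$, $x_k=x_{n_j-k}$. It is eventually palindromic if there is $N$ such that $(x_{N+i})_{i=0}^{\infty}$ is palindromic. *)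

(* Defs.v *)
From mathcomp Require Import all_boot.
Set Implicit Arguments. Unset Strict Implicit. Unset Printing Implicit Defensive.

(* Sum of base-m digits of n, computed with fuel k (fuel n suffices for m >= 2). *)
Fixpoint digsum_aux (m k n : nat) : nat :=
  match k with
  | 0 => 0
  | k'.+1 => if n == 0 then 0 else n %% m + digsum_aux m k' (n %/ m)
  end.

Definition digsum (m n : nat) : nat := digsum_aux m n n.

Definition TM (m : nat) (n : nat) : nat := digsum m n %% m.

Definition palindromic (x : nat -> nat) : Prop :=
  exists nj : nat -> nat,
    (forall j, 0 < nj j) /\ (forall j, nj j < nj j.+1) /\
    (forall j k, k <= nj j -> x k = x (nj j - k)).

Definition eventually_palindromic (x : nat -> nat) : Prop :=
  exists N : nat, palindromic (fun i => x (N + i)).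

(* Main.v *)
Require Import Defs.
From mathcomp Require Import all_boot.
From mathcomp Require Import zify.

Lemma aux_eq {m} (hm : 1 < m) k1 k2 n : n <= k1 -> n <= k2 ->
  digsum_aux m k1 n = digsum_aux m k2 n.
Proof.
elim: k1 k2 n => [|k1 IH] [|k2] n /= h1 h2.
- by [].
- have -> : n = 0 by lia. by [].
- have -> : n = 0 by lia. by [].
- case: eqP => // /eqP n0; congr (_ + _); apply: IH.
  + have : n %/ m < n by apply: ltn_Pdiv; lia.
    lia.
  + have : n %/ m < n by apply: ltn_Pdiv; lia.
    lia.
Qed.

Lemma digsum_eq {m} (hm : 1 < m) n : digsum m n = n %% m + digsum m (n %/ m).
Proof.
case: n => [|n]; first by rewrite mod0n div0n.
rewrite /digsum /=; congr (_ + _); apply: aux_eq => //.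
have : n.+1 %/ m < n.+1 by apply: ltn_Pdiv; lia.
lia.
Qed.

Lemma step {m} (hm : 1 < m) c : c.+1 %% m != 0 -> digsum m c.+1 = (digsum m c).+1.
Proof.
move=> h.
have hc := divn_eq c m.
have hr : c %% m < m by apply: ltn_pmod; lia.
case: (ltnP (c %% m).+1 m) => hr1.
- have e : c.+1 = c %/ m * m + (c %% m).+1 by lia.
  rewrite (digsum_eq hm c.+1) (digsum_eq hm c) e modnMDl divnMDl; last by lia.
  rewrite (modn_small hr1) (divn_small hr1) addn0; lia.
- have e : c.+1 = (c %/ m).+1 * m by rewrite mulSn; lia.
  by move: h; rewrite e modnMl.
Qed.

Lemma compl L k : k < 2 ^ L -> digsum 2 (2 ^ L - 1 - k) + digsum 2 k = L.
Proof.
elim: L k => [|L IH] k hk.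
- have -> : k = 0 by rewrite expn0 in hk; lia. by [].
- have hk2 := divn_eq k 2.
  have hr : k %% 2 < 2 by apply: ltn_pmod.
  rewrite expnS in hk.
  set P := 2 ^ L in IH hk *.
  have hq : k %/ 2 < P by lia.
  have e : 2 ^ L.+1 - 1 - k = (P - 1 - k %/ 2) * 2 + (1 - k %% 2).
    rewrite expnS -/P. lia.
  rewrite (digsum_eq (isT : 1 < 2) (2 ^ L.+1 - 1 - k)) e modnMDl divnMDl //.
  rewrite (modn_small (_ : 1 - k %% 2 < 2)); last by lia.
  rewrite (divn_small (_ : 1 - k %% 2 < 2)); last by lia.
  rewrite addn0 (digsum_eq (isT : 1 < 2) k).
  have := IH _ hq. lia.
Qed.

Theorem theorem2p2 (m : nat) (hm : 2 <= m) :
  (m = 2 -> palindromic (TM m)) /\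
  (2 < m -> ~ eventually_palindromic (TM m)).
Proof.
split.
- move=> ->.
  exists (fun j => 2 ^ (2 * j.+1) - 1); split; last split.
  + move=> j. rewrite mulnS expnD. have := expn_gt0 2 (2 * j). lia.
  + move=> j. rewrite (mulnS 2 j.+1) expnD. have := expn_gt0 2 (2 * j.+1). lia.
  + move=> j k hk. rewrite /TM.
    have hk' : k < 2 ^ (2 * j.+1) by have := expn_gt0 2 (2 * j.+1); lia.
    have := compl _ _ hk'.
    move: (digsum 2 (2 ^ (2 * j.+1) - 1 - k)) (digsum 2 k) => x y hxy.
    have e : x = 2 * j.+1 - y by lia.
    rewrite e. lia.
- move=> h2 [N [nj [hpos [hinc hpal]]]].
  have hm1 : 1 < m by lia.
  have hge : forall j, j <= nj j.
    elim=> [|j IH] //; have := hinc j; lia.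
  set n := nj m.+2.
  have hn : m.+2 <= n by apply: hge.
  set a := (N %/ m).+1 * m.
  have hNa : N < a by rewrite /a mulSn; have := divn_eq N m; have := ltn_pmod N (ltnW hm1); lia.
  have haN : a <= N + m by rewrite /a mulSn; have := divn_eq N m; lia.
  set k0 := a - N.
  have hk0 : k0.+2 <= n by rewrite /k0; lia.
  have P0 := hpal m.+2 k0 (ltac:(lia)).
  have P1 := hpal m.+2 k0.+1 (ltac:(lia)).
  have P2 := hpal m.+2 k0.+2 hk0.
  rewrite -/n in P0 P1 P2.
  set b := N + (n - k0).
  have eb1 : N + (n - k0.+1) = b.-1 by rewrite /b; lia.
  have eb2 : N + (n - k0.+2) = b.-2 by rewrite /b; lia.
  have ea0 : N + k0 = a by rewrite /k0; lia.
  have ea1 : N + k0.+1 = a.+1 by rewrite /k0; lia.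
  have ea2 : N + k0.+2 = a.+2 by rewrite /k0; lia.
  rewrite ea0 -/b in P0. rewrite ea1 eb1 in P1. rewrite ea2 eb2 in P2.
  move: P0 P1 P2.
  rewrite /TM.
  have hamod : a %% m = 0 by rewrite /a modnMl.
  have sa1 : digsum m a.+1 = (digsum m a).+1.
    apply: step => //. rewrite -addn1 -modnDml hamod add0n modn_small //.
  have sa2 : digsum m a.+2 = (digsum m a).+2.
    rewrite step // ?sa1 //. rewrite -addn2 -modnDml hamod add0n modn_small //.
  rewrite sa1 sa2.
  have hb : 2 <= b by rewrite /b; lia.
  have contra : forall x y, y %% m = x.+1 %% m -> y.+1 %% m = x %% m -> False.
    move=> x y e1 e2.
    have h1 : (y + 1) %% m = (x.+1 + 1) %% m by rewrite -modnDml e1 modnDml.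
    rewrite addn1 e2 addn1 in h1.
    move/eqP: h1; rewrite -[x in x %% m == _]addn0 -addn2 eqn_modDl mod0n modn_small //.
  case: (eqVneq (b %% m) 0) => hbm.
  + have hb1 : b.-1 %% m != 0.
      apply/eqP => e.
      have eb : b = b.-1 + 1 by lia.
      move: hbm. rewrite eb -modnDml e add0n modn_small //.
    have eb' : b.-1 = (b.-2).+1 by lia.
    rewrite eb' in hb1. rewrite eb' step // => _ e1 e2.
    exact: (contra (digsum m a).+1 (digsum m b.-2)).
  + have eb' : b = (b.-1).+1 by lia.
    rewrite eb' in hbm. rewrite {1}eb' step // => e0 e1 _.
    exact: (contra (digsum m a) (digsum m b.-1)).
Qed.
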